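(* Let $(n_k)_{k\ge0}$ be a strictly increasing sequence of positive integers such that $n_k$ divides $n_{k+1}$ for every $k\ge0$ and $\limsup_{k\to\infty}n_{k+1}/n_k=+\infty$. Then there exists a compact perfect subset $K$ of $\mathbb{T}$ containing the point $1$ such that $\lambda^{n_k}\to1$ uniformly on $K$.
   Context: $\mathbb{T}$ is the unit circle in $\mathbb{C}$. *)

(* Defs.v *)
From Stdlib Require Import Reals Lra Lia Arith.
Open Scope R_scope.

Definition Cplx := (R * R)%type.
Definition Cone : Cplx := (1, 0).
Definition Cmul (z w : Cplx) : Cplx :=
  (fst z * fst w - snd z * snd w, fst z * snd w + snd z * fst w).
Fixpoint Cpow (z : Cplx) (n : nat) : Cplx :=
  match n with O => Cone | S m => Cmul z (Cpow z m) end.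
Definition Cmod (z : Cplx) : R := sqrt (fst z * fst z + snd z * snd z).
Definition Cdist (z w : Cplx) : R := Cmod (fst z - fst w, snd z - snd w).

Definition unit_circle (z : Cplx) : Prop := Cmod z = 1.

Definition Cset := Cplx -> Prop.

Definition Cseq_cv (u : nat -> Cplx) (l : Cplx) : Prop :=
  forall eps, 0 < eps -> exists N, forall m, (N <= m)%nat -> Cdist (u m) l < eps.

(* compactness (sequential compactness, equivalent to compactness in C) *)
Definition compact_set (K : Cset) : Prop :=
  forall u : nat -> Cplx, (forall m, K (u m)) ->
    exists (phi : nat -> nat) (l : Cplx),
      (forall m, (phi m < phi (S m))%nat) /\ K l /\ Cseq_cv (fun m => u (phi m)) l.

Definition closed_set (K : Cset) : Prop :=
  forall z, (forall eps, 0 < eps -> exists w, K w /\ Cdist z w < eps) -> K z.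

Definition perfect_set (K : Cset) : Prop :=
  closed_set K /\
  forall z, K z -> forall eps, 0 < eps -> exists w, K w /\ w <> z /\ Cdist z w < eps.

Definition unif_pow_to_one (n : nat -> nat) (K : Cset) : Prop :=
  forall eps, 0 < eps -> exists N, forall k, (N <= k)%nat ->
    forall z, K z -> Cdist (Cpow z (n k)) Cone < eps.

(* Main.v *)
Require Import Defs.
From Stdlib Require Import Reals Arith Lra Lia ClassicalEpsilon Classical.
From Coquelicot Require Complex.
Open Scope R_scope.

Lemma Cmod_eq (z : Cplx) : Cmod z = Complex.Cmod z.
Proof. unfold Cmod, Complex.Cmod. f_equal. simpl. ring. Qed.

Lemma Cdist_eq (z w : Cplx) : Cdist z w = Complex.Cmod (Complex.Cminus z w).
Proof. unfold Cdist. rewrite Cmod_eq. reflexivity. Qed.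

Lemma Cdist_sym z w : Cdist z w = Cdist w z.
Proof. unfold Cdist, Cmod; simpl. f_equal. ring. Qed.

Lemma Cdist_triangle x y z : Cdist x z <= Cdist x y + Cdist y z.
Proof.
  rewrite !Cdist_eq.
  replace (Complex.Cminus x z) with
    (Complex.Cplus (Complex.Cminus x y) (Complex.Cminus y z)).
  apply Complex.Cmod_triangle.
  destruct x, y, z; unfold Complex.Cminus, Complex.Cplus, Complex.Copp; simpl.
  f_equal; ring.
Qed.

Lemma Cdist_refl z : Cdist z z = 0.
Proof. unfold Cdist, Cmod. simpl. replace (_ * _ + _ * _) with 0 by ring. apply sqrt_0. Qed.

Lemma Cdist_ge0 z w : 0 <= Cdist z w.
Proof. unfold Cdist, Cmod. apply sqrt_pos. Qed.

Lemma Cmod_triangle_rev z w : Rabs (Cmod z - Cmod w) <= Cdist z w.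
Proof.
  assert (H1 : Cmod z <= Cdist z w + Cmod w).
  { rewrite !Cmod_eq, Cdist_eq.
    replace z with (Complex.Cplus (Complex.Cminus z w) w) at 1.
    apply Complex.Cmod_triangle.
    destruct z, w; unfold Complex.Cminus, Complex.Cplus, Complex.Copp; simpl.
    f_equal; ring. }
  assert (H2 : Cmod w <= Cdist z w + Cmod z).
  { rewrite Cdist_sym. rewrite !Cmod_eq, Cdist_eq.
    replace w with (Complex.Cplus (Complex.Cminus w z) z) at 1.
    apply Complex.Cmod_triangle.
    destruct z, w; unfold Complex.Cminus, Complex.Cplus, Complex.Copp; simpl.
    f_equal; ring. }
  apply Rabs_le. lra.
Qed.

Lemma Cmod_mul z w : Cmod (Cmul z w) = Cmod z * Cmod w.
Proof. rewrite !Cmod_eq. apply Complex.Cmod_mult. Qed.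

Lemma Cpow_mod1 z m : Cmod z = 1 -> Cmod (Cpow z m) = 1.
Proof.
  intros H. induction m; simpl.
  - unfold Cmod, Cone; simpl. replace (1 * 1 + 0 * 0) with 1 by ring. apply sqrt_1.
  - rewrite Cmod_mul, H, IHm. ring.
Qed.

Lemma Cpow_lip z w m : Cmod z = 1 -> Cmod w = 1 ->
  Cdist (Cpow z m) (Cpow w m) <= INR m * Cdist z w.
Proof.
  intros Hz Hw. induction m.
  - simpl. rewrite Cdist_refl. lra.
  - apply Rle_trans with (Cdist (Cpow z (S m)) (Cmul z (Cpow w m)) +
                          Cdist (Cmul z (Cpow w m)) (Cpow w (S m))).
    apply Cdist_triangle.
    assert (E1 : Cdist (Cpow z (S m)) (Cmul z (Cpow w m)) = Cdist (Cpow z m) (Cpow w m)).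
    { simpl. unfold Cdist.
      replace (fst (Cmul z (Cpow z m)) - fst (Cmul z (Cpow w m)),
               snd (Cmul z (Cpow z m)) - snd (Cmul z (Cpow w m)))
        with (Cmul z (fst (Cpow z m) - fst (Cpow w m), snd (Cpow z m) - snd (Cpow w m))).
      rewrite Cmod_mul, Hz. ring.
      unfold Cmul; simpl. f_equal; ring. }
    assert (E2 : Cdist (Cmul z (Cpow w m)) (Cpow w (S m)) = Cdist z w).
    { simpl. unfold Cdist.
      replace (fst (Cmul z (Cpow w m)) - fst (Cmul w (Cpow w m)),
               snd (Cmul z (Cpow w m)) - snd (Cmul w (Cpow w m)))
        with (Cmul (fst z - fst w, snd z - snd w) (Cpow w m)).
      rewrite Cmod_mul, Cpow_mod1 by exact Hw. ring.
      unfold Cmul; simpl. f_equal; ring. }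
    rewrite E1, E2, S_INR. lra.
Qed.

Lemma Cdist_le_coord z w :
  Cdist z w <= Rabs (fst z - fst w) + Rabs (snd z - snd w).
Proof.
  unfold Cdist, Cmod; simpl.
  rewrite <- (sqrt_Rsqr (Rabs (fst z - fst w) + Rabs (snd z - snd w))).
  2:{ pose proof (Rabs_pos (fst z - fst w)); pose proof (Rabs_pos (snd z - snd w)); lra. }
  apply sqrt_le_1_alt. unfold Rsqr.
  pose proof (Rabs_pos (fst z - fst w)); pose proof (Rabs_pos (snd z - snd w)).
  replace ((fst z - fst w) * (fst z - fst w)) with (Rabs (fst z - fst w) * Rabs (fst z - fst w)).
  replace ((snd z - snd w) * (snd z - snd w)) with (Rabs (snd z - snd w) * Rabs (snd z - snd w)).
  nra.
  rewrite <- Rabs_mult. apply Rabs_pos_eq. apply Rle_0_sqr.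
  rewrite <- Rabs_mult. apply Rabs_pos_eq. apply Rle_0_sqr.
Qed.

Lemma mod1_bounds z : Cmod z = 1 -> -1 <= fst z <= 1 /\ -1 <= snd z <= 1.
Proof.
  unfold Cmod. intros H.
  assert (H2 : fst z * fst z + snd z * snd z = 1).
  { rewrite <- (sqrt_sqrt (fst z * fst z + snd z * snd z)) by nra. rewrite H. ring. }
  split; nra.
Qed.

Definition ee (a : R) : Cplx := (cos (2 * PI * a), sin (2 * PI * a)).

Lemma Cpow_ee a m : Cpow (ee a) m = ee (INR m * a).
Proof.
  induction m.
  - simpl. unfold ee, Cone. rewrite !Rmult_0_l, Rmult_0_r, cos_0, sin_0. reflexivity.
  - simpl Cpow. rewrite IHm, S_INR. unfold ee, Cmul. cbn [fst snd].
    replace (2 * PI * ((INR m + 1) * a)) with (2 * PI * a + 2 * PI * (INR m * a)) by ring.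
    rewrite cos_plus, sin_plus. f_equal; ring.
Qed.

Lemma ee_mod a : Cmod (ee a) = 1.
Proof. unfold Cmod, ee; simpl. rewrite <- sqrt_1. f_equal.
  pose proof (sin2_cos2 (2*PI*a)). unfold Rsqr in H. lra. Qed.

Lemma ee_nat (p : nat) : ee (INR p) = Cone.
Proof.
  unfold ee, Cone.
  replace (2 * PI * INR p) with (0 + 2 * INR p * PI) by ring.
  rewrite cos_period, sin_period, cos_0, sin_0. reflexivity.
Qed.

Lemma Cdist_ee a b : Cdist (ee a) (ee b) = 2 * Rabs (sin (PI * (a - b))).
Proof.
  unfold Cdist, Cmod, ee; simpl.
  set (A := 2 * PI * a). set (B := 2 * PI * b).
  replace ((cos A - cos B) * (cos A - cos B) + (sin A - sin B) * (sin A - sin B))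
    with (2 - 2 * cos (A - B)).
  2:{ rewrite cos_minus. pose proof (sin2_cos2 A); pose proof (sin2_cos2 B).
      unfold Rsqr in *. nra. }
  replace (A - B) with (2 * (PI * (a - b))) by (unfold A, B; ring).
  rewrite cos_2a_sin.
  replace (2 - 2 * (1 - 2 * sin (PI * (a - b)) * sin (PI * (a - b))))
    with ((2 * Rabs (sin (PI * (a - b)))) * (2 * Rabs (sin (PI * (a - b))))).
  apply sqrt_square. pose proof (Rabs_pos (sin (PI * (a - b)))). lra.
  replace ((2 * Rabs (sin (PI * (a - b)))) * (2 * Rabs (sin (PI * (a - b)))))
    with (4 * (Rabs (sin (PI * (a - b))) * Rabs (sin (PI * (a - b))))) by ring.
  rewrite <- Rabs_mult, Rabs_pos_eq by apply Rle_0_sqr. ring.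
Qed.

Lemma abs_sin_le x : Rabs (sin x) <= Rabs x.
Proof.
  assert (Hp : forall y, 0 < y -> Rabs (sin y) <= y).
  { intros y Hy. pose proof (sin_lt_x y Hy). apply Rabs_le. split; [|lra].
    destruct (Rle_lt_dec 1 y). pose proof (SIN_bound y). lra.
    assert (0 < sin y). apply sin_gt_0; auto. pose proof PI2_1. lra. lra. }
  destruct (Rtotal_order x 0) as [H|[H|H]].
  - rewrite <- (Ropp_involutive x), sin_neg, Rabs_Ropp, Rabs_Ropp.
    rewrite (Rabs_pos_eq (-x)) by lra. apply Hp. lra.
  - subst. rewrite sin_0, Rabs_R0. lra.
  - rewrite (Rabs_pos_eq x) by lra. apply Hp; auto.
Qed.

Lemma Cdist_ee_le a b : Cdist (ee a) (ee b) <= 2 * PI * Rabs (a - b).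
Proof.
  rewrite Cdist_ee. pose proof (abs_sin_le (PI * (a - b))).
  rewrite Rabs_mult, (Rabs_pos_eq PI) in H by (pose proof PI2_1; lra). lra.
Qed.

Lemma Cdist_ee_pos a b : 0 < a - b < 1 -> 0 < Cdist (ee a) (ee b).
Proof.
  intros H. rewrite Cdist_ee. assert (0 < sin (PI * (a - b))).
  apply sin_gt_0. pose proof PI2_1; nra. pose proof PI2_1; nra.
  rewrite Rabs_pos_eq; lra.
Qed.

Lemma inv_small eps : 0 < eps -> exists N : nat, forall m, (N <= m)%nat -> / (INR m + 1) < eps.
Proof.
  intros He. destruct (archimed (/ eps)) as [H1 _].
  assert (0 <= IZR (up (/eps))). { pose proof (Rinv_0_lt_compat eps He). lra. }
  destruct (IZN (up (/eps))) as [N HN]. apply le_IZR. lra.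
  exists N. intros m Hm. rewrite HN, <- INR_IZR_INZ in H1.
  apply le_INR in Hm.
  assert (0 < / eps) by (apply Rinv_0_lt_compat; auto).
  rewrite <- (Rinv_inv eps). apply Rinv_lt_contravar. nra. lra.
Qed.

Lemma incr_ge (phi : nat -> nat) : (forall m, (phi m < phi (S m))%nat) -> forall m, (m <= phi m)%nat.
Proof. intros H m; induction m. lia. specialize (H m). lia. Qed.

Lemma incr_lt (phi : nat -> nat) : (forall m, (phi m < phi (S m))%nat) ->
  forall a b, (a < b)%nat -> (phi a < phi b)%nat.
Proof. intros H a b Hab. induction Hab. apply H. specialize (H m). lia. Qed.

Lemma bw_sub (a : nat -> R) : (forall m, -1 <= a m <= 1) ->
  exists (phi : nat -> nat) (l : R), (forall m, (phi m < phi (S m))%nat) /\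
    (forall eps, 0 < eps -> exists N, forall m, (N <= m)%nat -> Rabs (a (phi m) - l) < eps).
Proof.
  intros Hb.
  destruct (Bolzano_Weierstrass a (fun c => -1 <= c <= 1) (compact_P3 (-1) 1) Hb) as [l Hl].
  assert (H : forall N m : nat, {p : nat | (N <= p)%nat /\ Rabs (a p - l) < / (INR m + 1)}).
  { intros N m. apply constructive_indefinite_description.
    assert (Hp : 0 < / (INR m + 1)). { apply Rinv_0_lt_compat. pose proof (pos_INR m). lra. }
    destruct (Hl (disc l (mkposreal _ Hp)) N) as [p [Hp1 Hp2]].
    - exists (mkposreal _ Hp). intros y Hy. exact Hy.
    - exists p. split; auto. }
  set (phi := fix f (m : nat) : nat := match m with
                | O => proj1_sig (H O O)
                | S m' => proj1_sig (H (S (f m')) (S m')) end).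
  assert (P1 : forall m, (phi m < phi (S m))%nat).
  { intros m. change (phi (S m)) with (proj1_sig (H (S (phi m)) (S m))).
    destruct (proj2_sig (H (S (phi m)) (S m))). lia. }
  assert (P2 : forall m, Rabs (a (phi m) - l) < / (INR m + 1)).
  { intros [|m]. change (phi O) with (proj1_sig (H O O)). apply (proj2_sig (H O O)).
    change (phi (S m)) with (proj1_sig (H (S (phi m)) (S m))).
    apply (proj2_sig (H (S (phi m)) (S m))). }
  exists phi, l. split; auto.
  intros eps He. destruct (inv_small eps He) as [N HN]. exists N. intros m Hm.
  specialize (P2 m). specialize (HN m Hm). lra.
Qed.

Lemma n_mono (n : nat -> nat) (hinc : forall k, (n k < n (S k))%nat) :
  forall a b, (a <= b)%nat -> (n a <= n b)%nat.
Proof. intros a b H. induction H. lia. specialize (hinc m). lia. Qed.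

Lemma n_divc (n : nat -> nat) (hdiv : forall k, Nat.divide (n k) (n (S k))) :
  forall a b, (a <= b)%nat -> Nat.divide (n a) (n b).
Proof. intros a b H. induction H. apply Nat.divide_refl.
  eapply Nat.divide_trans; eauto. Qed.

Lemma n_pos (n : nat -> nat) (hpos : (0 < n 0%nat)%nat) (hinc : forall k, (n k < n (S k))%nat) :
  forall k, (0 < n k)%nat.
Proof. intros k. pose proof (n_mono n hinc 0 k ltac:(lia)). lia. Qed.

Lemma half_pow_pos a : 0 < (1/2)^a.
Proof. apply pow_lt. lra. Qed.

Lemma half_pow_le a b : (a <= b)%nat -> (1/2)^b <= (1/2)^a.
Proof. intros H. induction H. lra. simpl. pose proof (half_pow_pos m). lra. Qed.

Fixpoint dsum (m : nat -> nat) (b : nat -> bool) (J : nat) : R :=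
  match J with
  | O => 0
  | S J' => dsum m b J' + (if b J' then / INR (m J') else 0)
  end.

Lemma ratio_bound (x M : R) (J : nat) : 0 <= x -> x * 2 ^ (S J) < M ->
  x * / M <= (1/2) ^ (S J).
Proof.
  intros Hx H.
  assert (Hp : 0 < 2 ^ (S J)) by (apply pow_lt; lra).
  assert (E : (1/2)^(S J) * 2^(S J) = 1).
  { rewrite <- Rpow_mult_distr. replace (1/2*2) with 1 by field. apply pow1. }
  assert (HM : 0 < M) by nra.
  apply Rmult_le_reg_r with M; auto.
  rewrite Rmult_assoc, Rinv_l, Rmult_1_r by lra.
  apply Rmult_le_reg_r with (2^(S J)); auto.
  replace ((1/2)^(S J) * M * 2^(S J)) with (M * ((1/2)^(S J) * 2^(S J))) by ring.
  rewrite E. lra.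
Qed.

Lemma estimate (n kk m : nat -> nat)
  (hpos : (0 < n 0%nat)%nat)
  (hinc : forall k, (n k < n (S k))%nat)
  (hdiv : forall k, Nat.divide (n k) (n (S k)))
  (Hm : forall j, m j = n (S (kk j)))
  (H2 : forall j, INR (n (kk j)) * 2 ^ (S j) < INR (m j))
  (k L : nat) (HL : forall j, (j < L)%nat -> (kk j < k)%nat) :
  forall b J, exists p : nat,
    0 <= INR (n k) * dsum m b J - INR p <= (1/2)^L - (1/2)^(Nat.max J L).
Proof.
  intros b J. induction J as [|J IH].
  - exists 0%nat. simpl. lra.
  - destruct IH as [p Hp].
    assert (Hmon : (1/2)^(Nat.max (S J) L) <= (1/2)^(Nat.max J L)) by (apply half_pow_le; lia).
    simpl dsum. destruct (b J).
    + destruct (lt_dec (kk J) k) as [Hlt|Hge].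
      * destruct (n_divc n hdiv (S (kk J)) k ltac:(lia)) as [q Hq].
        rewrite <- Hm in Hq.
        assert (Hmpos : (0 < m J)%nat) by (rewrite Hm; apply n_pos; auto).
        exists (p + q)%nat. rewrite plus_INR.
        replace (INR (n k) * (dsum m b J + / INR (m J)) - (INR p + INR q))
          with (INR (n k) * dsum m b J - INR p) .
        lra.
        rewrite Hq, mult_INR. field. apply not_0_INR. lia.
      * assert (HJL : (L <= J)%nat).
        { destruct (le_lt_dec L J); auto. specialize (HL J l). lia. }
        rewrite !Nat.max_l in * by lia.
        exists p.
        assert (Ht : INR (n k) * / INR (m J) <= (1/2)^(S J)).
        { apply ratio_bound. apply pos_INR.
          apply Rle_lt_trans with (INR (n (kk J)) * 2 ^ (S J)); auto.
          apply Rmult_le_compat_r. left; apply pow_lt; lra.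
          apply le_INR. apply n_mono; auto. lia. }
        assert (Ht0 : 0 <= INR (n k) * / INR (m J)).
        { apply Rmult_le_pos. apply pos_INR. left. apply Rinv_0_lt_compat.
          apply lt_0_INR. rewrite Hm; apply n_pos; auto. }
        replace ((1/2)^J) with (2 * (1/2)^(S J)) in Hp by (simpl; field).
        rewrite Rmult_plus_distr_l. lra.
    + exists p. rewrite Rplus_0_r. lra.
Qed.

Lemma dsum_ext m b b' J : (forall j, (j < J)%nat -> b j = b' j) -> dsum m b J = dsum m b' J.
Proof. induction J; intros H; simpl; auto. rewrite IHJ, H by (auto; intros; apply H; lia). reflexivity. Qed.

Lemma dsum_flip m b J J' : (J <= J')%nat ->
  dsum m (fun j => if (j <? J)%nat then b j else (j =? J')%nat) (S J') = dsum m b J + / INR (m J').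
Proof.
  intros HJ. simpl.
  replace (J' <? J)%nat with false by (symmetry; apply Nat.ltb_ge; lia).
  rewrite Nat.eqb_refl. f_equal.
  assert (Hd : forall d, (J + d <= J')%nat ->
     dsum m (fun j => if (j <? J)%nat then b j else (j =? J')%nat) (J + d) = dsum m b J).
  { induction d; intros Hd.
    - rewrite Nat.add_0_r. apply dsum_ext. intros j Hj.
      replace (j <? J)%nat with true by (symmetry; apply Nat.ltb_lt; lia). reflexivity.
    - replace (J + S d)%nat with (S (J + d)) by lia. simpl.
      rewrite IHd by lia.
      replace (J + d <? J)%nat with false by (symmetry; apply Nat.ltb_ge; lia).
      replace (J + d =? J')%nat with false by (symmetry; apply Nat.eqb_neq; lia). ring. }
  specialize (Hd (J' - J)%nat ltac:(lia)). replace (J + (J' - J))%nat with J' in Hd by lia. exact Hd.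
Qed.

Lemma small_half c : 0 < c -> exists L : nat, (1/2)^L < c.
Proof.
  intros Hc. destruct (pow_lt_1_zero (1/2) ltac:(rewrite Rabs_pos_eq; lra) c Hc) as [L HL].
  exists L. specialize (HL L (le_n _)). rewrite Rabs_pos_eq in HL; auto. left; apply half_pow_pos.
Qed.

Theorem proposition3p7 (n : nat -> nat)
  (hpos : (0 < n 0%nat)%nat)
  (hinc : forall k, (n k < n (S k))%nat)
  (hdiv : forall k, Nat.divide (n k) (n (S k)))
  (hlimsup : forall (M : R) (N : nat), exists k, (N <= k)%nat /\
               M < INR (n (S k)) / INR (n k)) :
  exists K : Cset,
    (forall z, K z -> unit_circle z) /\
    compact_set K /\ perfect_set K /\ K Cone /\
    unif_pow_to_one n K.
Proof.
  assert (F : forall (M : R) (N : nat), {k : nat | (N <= k)%nat /\ M < INR (n (S k)) / INR (n k)}).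
  { intros M N. apply constructive_indefinite_description. apply hlimsup. }
  set (f := fun M N => proj1_sig (F M N)).
  set (kk := fix g (j : nat) : nat := match j with
              | O => f (2 ^ 1) O
              | S j' => f (2 ^ (S (S j'))) (S (g j')) end).
  assert (Kspec : forall j, 2 ^ (S j) < INR (n (S (kk j))) / INR (n (kk j))).
  { intros [|j]. apply (proj2_sig (F (2^1) O)).
    apply (proj2_sig (F (2 ^ (S (S j))) (S (kk j)))). }
  assert (Kinc : forall j, (kk j < kk (S j))%nat).
  { intros j. change (kk (S j)) with (f (2 ^ (S (S j))) (S (kk j))).
    destruct (proj2_sig (F (2 ^ (S (S j))) (S (kk j)))). unfold f. lia. }
  set (m := fun j => n (S (kk j))).
  assert (Hm : forall j, m j = n (S (kk j))) by reflexivity.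
  assert (H2 : forall j, INR (n (kk j)) * 2 ^ (S j) < INR (m j)).
  { intros j. specialize (Kspec j). unfold m.
    assert (0 < INR (n (kk j))) by (apply lt_0_INR; apply n_pos; auto).
    apply Rmult_lt_compat_r with (r := INR (n (kk j))) in Kspec; auto.
    unfold Rdiv in Kspec. rewrite Rmult_assoc, Rinv_l, Rmult_1_r in Kspec by lra. lra. }
  assert (Hinvm : forall j, / INR (m j) <= (1/2) ^ (S j)).
  { intros j. rewrite <- (Rmult_1_l (/ INR (m j))). apply ratio_bound. lra.
    apply Rle_lt_trans with (INR (n (kk j)) * 2 ^ (S j)); auto.
    apply Rmult_le_compat_r. left; apply pow_lt; lra.
    apply (le_INR 1). apply n_pos; auto. }
  assert (Hmpos : forall j, 0 < INR (m j)).
  { intros j. apply lt_0_INR. unfold m. apply n_pos; auto. }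
  set (K := fun z : Cplx => forall eps, 0 < eps -> exists b J, Cdist z (ee (dsum m b J)) < eps).
  assert (closedK : Defs.closed_set K).
  { intros z Hz eps He. destruct (Hz (eps/2)) as [w [Kw Hw]]. lra.
    destruct (Kw (eps/2)) as [b [J HJ]]. lra. exists b, J.
    pose proof (Cdist_triangle z w (ee (dsum m b J))). lra. }
  assert (unitK : forall z, K z -> unit_circle z).
  { intros z Kz. unfold unit_circle. apply NNPP. intros Hne.
    assert (Hp : 0 < Rabs (Cmod z - 1)). { apply Rabs_pos_lt. lra. }
    destruct (Kz _ Hp) as [b [J HJ]].
    pose proof (Cmod_triangle_rev z (ee (dsum m b J))). rewrite ee_mod in H. lra. }
  assert (eeK : forall b J, K (ee (dsum m b J))).
  { intros b J eps He. exists b, J. rewrite Cdist_refl. auto. }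
  exists K. split; [exact unitK|]. split; [|split; [split|split]].
  -
    intros u Hu.
    assert (Hb : forall k, -1 <= fst (u k) <= 1 /\ -1 <= snd (u k) <= 1).
    { intros k. apply mod1_bounds. apply unitK. auto. }
    destruct (bw_sub (fun k => fst (u k))) as [p1 [l1 [Hp1 Hl1]]]. intros k; apply Hb.
    destruct (bw_sub (fun k => snd (u (p1 k)))) as [p2 [l2 [Hp2 Hl2]]]. intros k; apply Hb.
    assert (Hcv : Cseq_cv (fun k => u (p1 (p2 k))) (l1, l2)).
    { intros eps He. destruct (Hl1 (eps/2)) as [N1 HN1]. lra.
      destruct (Hl2 (eps/2)) as [N2 HN2]. lra.
      exists (Nat.max N1 N2). intros k Hk.
      pose proof (Cdist_le_coord (u (p1 (p2 k))) (l1, l2)). simpl in H.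
      pose proof (HN2 k ltac:(lia)).
      pose proof (HN1 (p2 k) ltac:(pose proof (incr_ge p2 Hp2 k); lia)). simpl in *. lra. }
    exists (fun k => p1 (p2 k)), (l1, l2). split; [|split; auto].
    + intros k. apply (incr_lt p1 Hp1). apply Hp2.
    + apply closedK. intros eps He. destruct (Hcv eps He) as [N HN].
      exists (u (p1 (p2 N))). split; auto. rewrite Cdist_sym. apply HN. lia.
  - exact closedK.
  -
    intros z Kz eps He.
    assert (Hc : 0 < eps / (4 * PI)). { pose proof PI_RGT_0. apply Rdiv_lt_0_compat; lra. }
    destruct (small_half _ Hc) as [L HL].
    destruct (Kz (eps/2)) as [b [J HJ]]. lra.
    destruct (classic (ee (dsum m b J) = z)) as [Heq|Hneq].
    + set (J' := Nat.max J L).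
      set (b' := fun j => if (j <? J)%nat then b j else (j =? J')%nat).
      exists (ee (dsum m b' (S J'))). split; [apply eeK|].
      unfold b'. rewrite dsum_flip by lia.
      assert (Hi1 : / INR (m J') <= (1/2)^(S J')) by apply Hinvm.
      assert (Hi2 : (1/2)^(S J') <= (1/2)^L) by (apply half_pow_le; lia).
      assert (Hi3 : (1/2)^(S J') <= 1/2) by (pose proof (half_pow_le 1 (S J') ltac:(lia)); simpl in *; lra).
      assert (Hi0 : 0 < / INR (m J')) by (apply Rinv_0_lt_compat; auto).
      split.
      * intros Habs. rewrite <- Heq in Habs.
        pose proof (Cdist_ee_pos (dsum m b J + / INR (m J')) (dsum m b J)
                      ltac:(split; lra)).
        rewrite Habs, Cdist_refl in H. lra.
      * rewrite <- Heq.
        pose proof (Cdist_ee_le (dsum m b J) (dsum m b J + / INR (m J'))).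
        replace (dsum m b J - (dsum m b J + / INR (m J'))) with (- / INR (m J')) in H by ring.
        rewrite Rabs_Ropp, Rabs_pos_eq in H by lra.
        pose proof PI_RGT_0.
        assert (2 * PI * / INR (m J') <= 2 * PI * (1/2)^L) by (apply Rmult_le_compat_l; lra).
        assert (2 * PI * (1/2)^L < 2 * PI * (eps / (4 * PI))) by (apply Rmult_lt_compat_l; lra).
        replace (2 * PI * (eps / (4 * PI))) with (eps / 2) in H3 by (field; lra).
        lra.
    + exists (ee (dsum m b J)). split; [apply eeK|]. split.
      intros E; apply Hneq; auto. lra.
  -
    intros eps He. exists (fun _ => false), O. simpl. rewrite <- (ee_nat 0).
    simpl. rewrite Cdist_refl. auto.
  -
    intros eps He.
    assert (Hc : 0 < eps / (4 * PI)). { pose proof PI_RGT_0. apply Rdiv_lt_0_compat; lra. }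
    destruct (small_half _ Hc) as [L HL].
    exists (kk L). intros k Hk z Kz.
    assert (HL' : forall j, (j < L)%nat -> (kk j < k)%nat).
    { intros j Hj. pose proof (incr_lt kk Kinc j L Hj). lia. }
    assert (Hnk : 0 <= INR (n k)) by apply pos_INR.
    set (c := eps / 2 / (INR (n k) + 1)).
    assert (Hcp : 0 < c) by (unfold c; apply Rdiv_lt_0_compat; lra).
    destruct (Kz c Hcp) as [b [J HJ]].
    destruct (estimate n kk m hpos hinc hdiv Hm H2 k L HL' b J) as [p Hp].
    pose proof (half_pow_pos (Nat.max J L)).
    apply Rle_lt_trans with (Cdist (Cpow z (n k)) (Cpow (ee (dsum m b J)) (n k)) +
                             Cdist (Cpow (ee (dsum m b J)) (n k)) Cone).
    apply Cdist_triangle.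
    assert (A1 : Cdist (Cpow z (n k)) (Cpow (ee (dsum m b J)) (n k)) < eps / 2).
    { eapply Rle_lt_trans. apply Cpow_lip. apply unitK; auto. apply ee_mod.
      assert (INR (n k) * Cdist z (ee (dsum m b J)) <= INR (n k) * c).
      { apply Rmult_le_compat_l; auto. lra. }
      assert (INR (n k) * c < eps / 2).
      { unfold c. apply Rmult_lt_reg_r with (INR (n k) + 1). lra.
        replace (INR (n k) * (eps / 2 / (INR (n k) + 1)) * (INR (n k) + 1))
          with (INR (n k) * (eps / 2)) by (field; lra). nra. }
      lra. }
    assert (A2 : Cdist (Cpow (ee (dsum m b J)) (n k)) Cone < eps / 2).
    { rewrite Cpow_ee, <- (ee_nat p).
      eapply Rle_lt_trans. apply Cdist_ee_le.
      rewrite Rabs_pos_eq by lra.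
      pose proof PI_RGT_0.
      assert (2 * PI * (INR (n k) * dsum m b J - INR p) <= 2 * PI * (1/2)^L)
        by (apply Rmult_le_compat_l; lra).
      assert (2 * PI * (1/2)^L < 2 * PI * (eps / (4 * PI))) by (apply Rmult_lt_compat_l; lra).
      replace (2 * PI * (eps / (4 * PI))) with (eps / 2) in H3 by (field; lra).
      lra. }
    lra.
Qed.
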